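(* In the setting of the context, consider any sample path. Then for any integer $t_0\ge 0$ and any vector $\tilde Q_{t_0}$, the sequence $\{\hat Q_t\}$ is bounded below if and only if the sequence $\{\tilde Q_t\}$ defined from $t_0$ and $\tilde Q_{t_0}$ is bounded below.
   Context: Finite-space game: $S=\{1,\dots,n\}$, $S_o=S\cup\{0\}$, $0$ an absorbing termination state; at $i\in S$ players I and II have finite control sets $U(i),V(i)$; under $(u,v)$ transition to $j\in S_o$ w.p. $p_{ij}(u,v)$ with real transition cost $\hat g(i,u,v,j)$. $R=\{(i,u,v):i\in S,u\in U(i),v\in V(i)\}$; $U(0)=V(0)=\{0\}$, and all Q-factor vectors are indexed by $R\cup\{(0,0,0)\}$ with value $0$ at $(0,0,0)$. Fix a stationary randomized policy $\bar\nu$ of player II and write $\bar\nu_s=\bar\nu(\cdot\mid s)\in\mathcal P(V(s))$ (point mass at $0$ for $s=0$). For a vector $Q$, state $s$, $\tilde u\in U(s)$: $\underline Q(s,\tilde u,\bar\nu_s)=\sum_{\tilde v\in V(s)}\bar\nu_s(\tilde v)Q(s,\tilde u,\tilde v)$. Random variables (fixed along a sample path): stepsizes $\gamma_{t,\ell}\in[0,1]$, delays $0\le\tau_{\ell\tilde\ell}(t)\le t$, successors $j_t^\ell\in S_o$ for $\ell,\tilde\ell\in R$, $t\ge0$, and $\hat Q_0$. For any vector sequence $\{X_t\}$ write $X^{(\ell)}_t(\tilde\ell)=X_{\tau_{\ell\tilde\ell}(t)}(\tilde\ell)$. The sequence $\{\hat Q_t\}$ satisfies, for $\ell=(i,u,v)\in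 R$ and $s=j_t^\ell$: $\hat Q_{t+1}(i,u,v)=(1-\gamma_{t,\ell})\hat Q_t(i,u,v)+\gamma_{t,\ell}(\hat g(i,u,v,s)+\underline{\hat Q}^{(\ell)}_t(s,u_t^\ell,\bar\nu_s))$, where $u_t^\ell\in\arg\min_{\tilde u\in U(s)}\underline{\hat Q}^{(\ell)}_t(s,\tilde u,\bar\nu_s)$. Given an integer $t_0$ and a vector $\tilde Q_{t_0}$, the sequence $\{\tilde Q_t\}$ is defined by $\tilde Q_t=\tilde Q_{t_0}$ for $t\le t_0$ and, for $t\ge t_0$, $\tilde Q_{t+1}(i,u,v)=(1-\gamma_{t,\ell})\tilde Q_t(i,u,v)+\gamma_{t,\ell}(\hat g(i,u,v,s)+\underline{\tilde Q}^{(\ell)}_t(s,u_t^\ell,\bar\nu_s))$, using the same $\gamma_{t,\ell}$, $j_t^\ell$, $u_t^\ell$, $\tau_{\ell\tilde\ell}(t)$. *)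

(* Defs.v *)
(* States S_o = 'I_n.+1 with ord0 the termination state 0,
   S = {1,...,n} = the nonzero ordinals.  Controls of player I live in a
   finType TU, controls of player II in a finType TV; U i : {set TU} and
   V i : {set TV} are the finite control sets at state i. *)
From mathcomp Require Import all_boot all_order all_algebra.
From mathcomp Require Import reals.
Set Implicit Arguments. Unset Strict Implicit. Unset Printing Implicit Defensive.
Import Order.TTheory GRing.Theory Num.Theory.
Local Open Scope ring_scope.

Definition trip (n : nat) (TU TV : finType) := ('I_n.+1 * TU * TV)%type.

Definition inR (n : nat) (TU TV : finType)
  (U : 'I_n.+1 -> {set TU}) (V : 'I_n.+1 -> {set TV}) (l : trip n TU TV) : bool :=
  [&& l.1.1 != ord0, l.1.2 \in U l.1.1 & l.2 \in V l.1.1].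

(* underline Q (s, u, nu_s) = sum_{v in V(s)} nu_s(v) Q(s,u,v);
   for s = 0 this is Q(0,0,0) = 0 (nu_0 is the point mass at 0). *)
Definition Qbar (R : realType) (n : nat) (TU TV : finType)
  (V : 'I_n.+1 -> {set TV}) (nu : 'I_n.+1 -> TV -> R)
  (Q : trip n TU TV -> R) (s : 'I_n.+1) (u : TU) : R :=
  if s == ord0 then 0 else \sum_(v in V s) nu s v * Q (s, u, v).

Definition delayed (R : realType) (n : nat) (TU TV : finType)
  (X : nat -> trip n TU TV -> R) (tau : trip n TU TV -> trip n TU TV -> nat -> nat)
  (l : trip n TU TV) (t : nat) : trip n TU TV -> R :=
  fun l' => X (tau l l' t) l'.

Definition bounded_below (R : realType) (n : nat) (TU TV : finType)
  (U : 'I_n.+1 -> {set TU}) (V : 'I_n.+1 -> {set TV})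
  (X : nat -> trip n TU TV -> R) : Prop :=
  exists c : R, forall t l, inR U V l -> c <= X t l.

(* Main.v *)
Require Import Defs.
From mathcomp Require Import all_boot all_order all_algebra.
From mathcomp Require Import reals.
From mathcomp Require Import ring lra.
Import Order.TTheory GRing.Theory Num.Theory.
Local Open Scope ring_scope.

Lemma le_sum_nn (R : realType) (I : finType) (P : pred I) (F : I -> R) i :
  P i -> (forall j, P j -> 0 <= F j) -> F i <= \sum_(j | P j) F j.
Proof.
move=> Pi H; rewrite (bigD1 i) //= lerDl sumr_ge0 // => j /andP[Pj _]; exact: H.
Qed.

Theorem lemma4p3 (R : realType) (n : nat) (TU TV : finType)
  (U : 'I_n.+1 -> {set TU}) (V : 'I_n.+1 -> {set TV})
  (HU : forall i : 'I_n.+1, i != ord0 -> U i != set0)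
  (HV : forall i : 'I_n.+1, i != ord0 -> V i != set0)
  (nu : 'I_n.+1 -> TV -> R)
  (Hnu0 : forall (s : 'I_n.+1) v, s != ord0 -> v \in V s -> 0 <= nu s v)
  (Hnu1 : forall s : 'I_n.+1, s != ord0 -> \sum_(v in V s) nu s v = 1)
  (g : trip n TU TV -> 'I_n.+1 -> R)
  (gamma : nat -> trip n TU TV -> R)
  (Hgamma : forall t l, inR U V l -> 0 <= gamma t l <= 1)
  (tau : trip n TU TV -> trip n TU TV -> nat -> nat)
  (Htau : forall l l' t, inR U V l -> inR U V l' -> (tau l l' t <= t)%N)
  (j : nat -> trip n TU TV -> 'I_n.+1)
  (u : nat -> trip n TU TV -> TU)
  (Qhat : nat -> trip n TU TV -> R)
  (Hu : forall t l, inR U V l -> j t l != ord0 ->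
     u t l \in U (j t l) /\
     forall u', u' \in U (j t l) ->
       Qbar V nu (delayed Qhat tau l t) (j t l) (u t l)
       <= Qbar V nu (delayed Qhat tau l t) (j t l) u')
  (Hhat : forall t l, inR U V l ->
     Qhat t.+1 l = (1 - gamma t l) * Qhat t l
       + gamma t l * (g l (j t l) + Qbar V nu (delayed Qhat tau l t) (j t l) (u t l)))
  (t0 : nat) (Qtil : nat -> trip n TU TV -> R)
  (Htil0 : forall t l, (t <= t0)%N -> inR U V l -> Qtil t l = Qtil t0 l)
  (Htil : forall t l, (t0 <= t)%N -> inR U V l ->
     Qtil t.+1 l = (1 - gamma t l) * Qtil t l
       + gamma t l * (g l (j t l) + Qbar V nu (delayed Qtil tau l t) (j t l) (u t l))) :
  bounded_below U V Qhat <-> bounded_below U V Qtil.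
Proof.
pose D t l := Qhat t l - Qtil t l.
pose M := \sum_(k < t0.+1) \sum_(l | inR U V l) `|D k l|.
have M0 : 0 <= M by apply: sumr_ge0 => k _; apply: sumr_ge0 => l _.
have Hsmall : forall k l, (k <= t0)%N -> inR U V l -> `|D k l| <= M.
  move=> k l hk hl.
  have hk' : (k < t0.+1)%N by [].
  apply: (le_trans _ (@le_sum_nn R _ predT
             (fun k : 'I_t0.+1 => \sum_(l | inR U V l) `|D k l|)
             (Ordinal hk') isT _)) => /=.
    by apply: (@le_sum_nn R _ (inR U V) (fun l => `|D k l|)).
  by move=> i _; apply: sumr_ge0.
have Hall : forall t k l, (k <= t)%N -> inR U V l -> `|D k l| <= M.
  elim=> [|t IH] k l hk hl.
    by apply: Hsmall => //; apply: leq_trans hk _.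
  rewrite leq_eqVlt in hk; case/orP: hk => [/eqP -> | hk]; last by apply: IH.
  case: (leqP t.+1 t0) => ht; first by apply: Hsmall.
  have ht0 : (t0 <= t)%N by [].
  have HQ : `|Qbar V nu (delayed Qhat tau l t) (j t l) (u t l)
             - Qbar V nu (delayed Qtil tau l t) (j t l) (u t l)| <= M.
    rewrite /Qbar; case: eqP => [_|/eqP s0]; first by rewrite subr0 normr0.
    have [uU _] := Hu t l hl s0.
    rewrite -sumrB.
    apply: (le_trans (ler_norm_sum _ _ _)).
    apply: (@le_trans _ _ (\sum_(v in V (j t l)) nu (j t l) v * M)); last first.
      by rewrite -mulr_suml Hnu1 // mul1r.
    apply: ler_sum => v vV.
    rewrite -mulrBr normrM ger0_norm; last exact: Hnu0.
    apply: ler_wpM2l; first exact: Hnu0.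
    have hl' : inR U V (j t l, u t l, v) by rewrite /inR /= s0 uU vV.
    rewrite /delayed; apply: IH => //; exact: Htau.
  have -> : D t.+1 l = (1 - gamma t l) * D t l + gamma t l *
     (Qbar V nu (delayed Qhat tau l t) (j t l) (u t l)
             - Qbar V nu (delayed Qtil tau l t) (j t l) (u t l)).
    rewrite /D Hhat // Htil //; ring.
  have Ht := IH t l (leqnn t) hl.
  have /andP[g0 g1] := Hgamma t l hl.
  apply: (le_trans (ler_normD _ _)); rewrite !normrM.
  rewrite (ger0_norm g0) ger0_norm; last by rewrite subr_ge0.
  have : (1 - gamma t l) * `|D t l| <= (1 - gamma t l) * M
    by apply: ler_wpM2l => //; rewrite subr_ge0.
  have : gamma t l * `|Qbar V nu (delayed Qhat tau l t) (j t l) (u t l)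
       - Qbar V nu (delayed Qtil tau l t) (j t l) (u t l)| <= gamma t l * M
    by apply: ler_wpM2l.
  lra.
have HB : forall t l, inR U V l -> `|D t l| <= M
  by move=> t l hl; exact: (Hall t t l (leqnn t) hl).
split=> -[c Hc]; exists (c - M) => t l hl.
  have := HB t l hl; have := Hc t l hl; rewrite /D => h1 h2.
  rewrite ler_norml in h2; case/andP: h2 => h2 h3.
  have -> : Qtil t l = Qhat t l - (Qhat t l - Qtil t l) by rewrite opprB addrC subrK.
  by apply: lerB.
have := HB t l hl; have := Hc t l hl; rewrite /D => h1 h2.
rewrite ler_norml in h2; case/andP: h2 => h2 h3.
have -> : Qhat t l = Qtil t l + (Qhat t l - Qtil t l) by rewrite addrC subrK.
by apply: lerD.
Qed.
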